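(* Let $\alpha>0$ and $0\le m<s<M$. If $f_n\in\mathcal{F}(m,M,s)$ for $n=1,2,\dots$ and $f_n\to f$ a.e. on $[-\pi,\pi]$, then $u_{f_n}\to u_f$ uniformly on $[-\pi,\pi]$. Moreover, there is a subsequence $(f_{n_k})$ with $\lim_{k\to\infty}\operatorname{osc}(u_{f_{n_k}})=\operatorname{osc}(u_f)$.
   Context: Robin problem: for $\alpha>0$ and $f\in L^1[-\pi,\pi]$, find $u\in C^1[-\pi,\pi]$ with $u'$ absolutely continuous on $[-\pi,\pi]$, $-u''=f$ a.e. on $(-\pi,\pi)$, and $-u'(-\pi)+\alpha u(-\pi)=u'(\pi)+\alpha u(\pi)=0$. It has a unique solution $u_f(x)=\int_{-\pi}^{\pi}G(x,y)f(y)\,dy$, where $G(x,y)=-\tfrac12 c_\alpha xy-\tfrac12|x-y|+\tfrac{1}{2c_\alpha}$ and $c_\alpha=\alpha/(1+\alpha\pi)$. For $0\le m<s<M$, $\mathcal{F}(m,M,s)$ is the set of $f\in L^1[-\pi,\pi]$ with $m\le f\le M$ and $\|f\|_{L^1}=2\pi s$. $\operatorname{osc}(u)=\max_{[-\pi,\pi]}u-\min_{[-\pi,\pi]}u$. *)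

(* Defs.v *)
From HB Require Import structures.
From mathcomp Require Import all_boot all_order all_algebra.
From mathcomp Require Import all_classical all_reals all_analysis.
Set Implicit Arguments. Unset Strict Implicit. Unset Printing Implicit Defensive.
Import Order.TTheory GRing.Theory Num.Theory.
Import numFieldNormedType.Exports.
Local Open Scope classical_set_scope.
Local Open Scope ring_scope.

Section Robin.
Variable R : realType.

Definition I : set R := `[- pi, pi]%classic.

Definition c_alpha (alpha : R) : R := alpha / (1 + alpha * pi).

Definition Green (alpha : R) (x y : R) : R :=
  - (c_alpha alpha * x * y) / 2 - `|x - y| / 2 + (2 * c_alpha alpha)^-1.

Definition u_sol (alpha : R) (f : R -> R) (x : R) : R :=
  Rintegral (@lebesgue_measure R) I (fun y => Green alpha x y * f y).

Definition Fclass (m M s : R) (f : R -> R) : Prop :=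
  [/\ (@lebesgue_measure R).-integrable I (fun x => (f x)%:E),
      {ae @lebesgue_measure R, forall x, I x -> m <= f x <= M} &
      (\int[@lebesgue_measure R]_(x in I) `|(f x)%:E| = (2 * pi * s)%:E)%E].

(* osc(u) = max_I u - min_I u (sup/inf of the image; attained for continuous u) *)
Definition osc (u : R -> R) : R := sup (u @` I) - inf (u @` I).

End Robin.

(* Main.v *)
Require Import Defs.
From HB Require Import structures.
From mathcomp Require Import all_boot all_order all_algebra.
From mathcomp Require Import all_classical all_reals all_analysis.
From mathcomp Require Import lra measurable_realfun.
Import Order.TTheory GRing.Theory Num.Theory.
Import numFieldNormedType.Exports.
Local Open Scope classical_set_scope.
Local Open Scope ring_scope.
Set Implicit Arguments. Unset Strict Implicit. Unset Printing Implicit Defensive.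

Section Aux.
Variable R : realType.
Notation mu := (@lebesgue_measure R).

Lemma mI : @measurable _ (measurableTypeR R) (@I R).
Proof. exact: measurable_itv. Qed.

Lemma muI : (mu (@I R) < +oo)%E.
Proof. by rewrite /I lebesgue_measure_itv /=; case: ifP => _; rewrite ltry. Qed.

Lemma int_cst (k : R) : mu.-integrable (@I R) (EFin \o cst k).
Proof.
apply/integrableP; split; first exact/measurable_EFinP/measurable_cst.
rewrite (_ : (fun x => _) = cst `|k|%:E); last by apply/funext.
rewrite integral_cst; [apply: lte_mul_pinfty => //; exact: muI | exact: mI].
Qed.

Lemma I_norm (x : R) : @I R x -> `|x| <= pi.
Proof. by rewrite /I /= in_itv /= ler_norml. Qed.

Definition Cb (alpha : R) : R := c_alpha alpha * (pi * pi) + pi + (2 * c_alpha alpha)^-1.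

Lemma c_gt0 (alpha : R) : 0 < alpha -> 0 < c_alpha alpha.
Proof.
move=> a0; rewrite /c_alpha divr_gt0 // ltr_wpDr // mulr_ge0 // ?ltW //; exact: pi_gt0.
Qed.

Lemma Green_bound (alpha x y : R) : 0 < alpha -> @I R x -> @I R y ->
  `|Green alpha x y| <= Cb alpha.
Proof.
move=> a0 /I_norm hx /I_norm hy; have c0 := c_gt0 a0.
set c := c_alpha alpha.
have h1 : `|c * x * y| <= c * (pi * pi).
  by rewrite -mulrA normrM gtr0_norm // ler_pM2l // normrM ler_pM.
have h2 : `|x - y| <= pi + pi by rewrite (le_trans (ler_normB _ _)) // lerD.
have h3 : 0 <= `|x - y| by [].
have h4 : 0 < (2 * c)^-1 by rewrite invr_gt0 mulr_gt0.
move: h1; rewrite /Green /Cb -/c !ler_norml => /andP[h1 h1'].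
set t := `|x - y| in h2 h3 *; set w := (2 * c)^-1 in h4 *.
apply/andP; split; lra.
Qed.

Lemma Green_meas (alpha x : R) : measurable_fun (T:=measurableTypeR R) (@I R) (fun y => Green alpha x y).
Proof.
rewrite /Green.
apply: measurable_funD; last exact: measurable_cst.
apply: measurable_funB.
  apply: measurable_funM; last exact: measurable_cst.
  apply: measurable_funN; apply: measurable_funM; first exact: measurable_cst.
  exact: measurable_id.
apply: measurable_funM; last exact: measurable_cst.
apply: measurableT_comp => //.
apply: measurable_funB; first exact: measurable_cst.
exact: measurable_id.
Qed.


Lemma Cb_ge0 (alpha : R) : 0 < alpha -> 0 <= Cb alpha.
Proof.
move=> a0; have I0 : @I R 0 by rewrite /I /= in_itv /= oppr_le0 pi_ge0.
exact: le_trans (normr_ge0 _) (Green_bound a0 I0 I0).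
Qed.

Lemma Gbounded (alpha x : R) : 0 < alpha -> @I R x ->
  [bounded Green alpha x y | y in @I R].
Proof.
move=> a0 Ix; exists (Cb alpha); split; first exact: num_real.
move=> M hM y Iy; apply: le_trans (ltW hM).
exact: Green_bound.
Qed.

Lemma int_Gh (alpha x : R) (h : R -> R) : 0 < alpha -> @I R x ->
  mu.-integrable (@I R) (EFin \o h) ->
  mu.-integrable (@I R) (EFin \o (fun y => Green alpha x y * h y)).
Proof.
move=> a0 Ix hi.
rewrite (_ : EFin \o _ = ((EFin \o Green alpha x) \* (EFin \o h))%E); last first.
  by apply/funext => y /=; rewrite EFinM.
have H := (integrableMr mI (Green_meas alpha x) (Gbounded a0 Ix) hi). exact H.
Qed.

Lemma u_bound (alpha x : R) (h : R -> R) : 0 < alpha -> @I R x ->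
  mu.-integrable (@I R) (EFin \o h) ->
  `|u_sol alpha h x| <= Cb alpha * Rintegral mu (@I R) (fun y => `|h y|).
Proof.
move=> a0 Ix hi; rewrite /u_sol.
apply: le_trans; first exact: (le_normr_Rintegral mI (int_Gh a0 Ix hi)).
rewrite -RintegralZl; last exact/integrable_norm.
apply: le_Rintegral; first exact: mI.
- exact/(integrable_norm (int_Gh a0 Ix hi)).
- have := integrableZl mI (Cb alpha) (integrable_norm hi).
  by rewrite (_ : (fun x => _) = EFin \o (fun y => Cb alpha * `|h y|)) //; apply/funext => y /=; rewrite EFinM.
- move=> y Iy; rewrite normrM ler_wpM2r //; first exact: Green_bound.
exact: mI.
Qed.

Lemma u_diff (alpha x : R) (h g : R -> R) : 0 < alpha -> @I R x ->
  mu.-integrable (@I R) (EFin \o h) -> mu.-integrable (@I R) (EFin \o g) ->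
  u_sol alpha h x - u_sol alpha g x = u_sol alpha (h \- g) x.
Proof.
move=> a0 Ix hi gi; rewrite /u_sol -RintegralB //; first last.
- exact: int_Gh.
- exact: int_Gh.
- exact: mI.
by apply: eq_Rintegral => y _; rewrite /= mulrBr.
Qed.

Lemma intB (h g : R -> R) : 
  mu.-integrable (@I R) (EFin \o h) -> mu.-integrable (@I R) (EFin \o g) ->
  mu.-integrable (@I R) (EFin \o (h \- g)).
Proof.
move=> hi gi; have := integrableB mI hi gi.
by rewrite (_ : (fun x => _) = EFin \o (h \- g)) //; apply/funext => y /=; rewrite EFinB.
Qed.


Lemma I0 : @I R 0.
Proof. by rewrite /I /= in_itv /= oppr_le0 pi_ge0. Qed.

Lemma osc_close (u v : R -> R) (d B : R) :
  (forall x, @I R x -> `|u x| <= B) ->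
  (forall x, @I R x -> `|u x - v x| <= d) ->
  `|osc u - osc v| <= d + d.
Proof.
move=> uB uv.
have hu x : @I R x -> -B <= u x <= B by move=> Ix; rewrite -ler_norml uB.
have huv x : @I R x -> -d <= u x - v x <= d by move=> Ix; rewrite -ler_norml uv.
have neu : (u @` @I R) !=set0 by exists (u 0); exists 0 => //; exact: I0.
have nev : (v @` @I R) !=set0 by exists (v 0); exists 0 => //; exact: I0.
have ubu : has_ubound (u @` @I R).
  by exists B => _ [x Ix <-]; have /andP[] := hu x Ix.
have lbu : has_lbound (u @` @I R).
  by exists (-B) => _ [x Ix <-]; have /andP[] := hu x Ix.
have ubv : has_ubound (v @` @I R).
  exists (B + d) => _ [x Ix <-]; have /andP[? ?] := hu x Ix.
  have /andP[? ?] := huv x Ix; lra.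
have lbv : has_lbound (v @` @I R).
  exists (-B - d) => _ [x Ix <-]; have /andP[? ?] := hu x Ix.
  have /andP[? ?] := huv x Ix; lra.
have s1 : sup (v @` @I R) <= sup (u @` @I R) + d.
  apply: ge_sup => // _ [x Ix <-].
  have := ub_le_sup ubu (ex_intro2 _ _ x Ix erefl : (u @` @I R) (u x)).
  have /andP[? ?] := huv x Ix; lra.
have s2 : sup (u @` @I R) <= sup (v @` @I R) + d.
  apply: ge_sup => // _ [x Ix <-].
  have := ub_le_sup ubv (ex_intro2 _ _ x Ix erefl : (v @` @I R) (v x)).
  have /andP[? ?] := huv x Ix; lra.
have i1 : inf (v @` @I R) - d <= inf (u @` @I R).
  apply: lb_le_inf => // _ [x Ix <-].
  have := ge_inf lbv (ex_intro2 _ _ x Ix erefl : (v @` @I R) (v x)).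
  have /andP[? ?] := huv x Ix; lra.
have i2 : inf (u @` @I R) - d <= inf (v @` @I R).
  apply: lb_le_inf => // _ [x Ix <-].
  have := ge_inf lbu (ex_intro2 _ _ x Ix erefl : (u @` @I R) (u x)).
  have /andP[? ?] := huv x Ix; lra.
rewrite /osc ler_norml; apply/andP; split; lra.
Qed.

End Aux.

Theorem lemma4 (R : realType) (alpha m M s : R) (fn : nat -> R -> R) (f : R -> R) :
  0 < alpha -> 0 <= m -> m < s -> s < M ->
  (forall n, Fclass m M s (fn n)) ->
  measurable_fun (@I R) f ->
  {ae @lebesgue_measure R, forall x, @I R x -> fn n x @[n --> \oo] --> f x} ->
  (forall e : R, 0 < e -> \forall n \near \oo,
      forall x, @I R x -> `|u_sol alpha (fn n) x - u_sol alpha f x| < e)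
  /\
  (exists phi : nat -> nat, {homo phi : i j / (i < j)%N >-> (i < j)%N} /\
      osc (u_sol alpha (fn (phi k))) @[k --> \oo] --> osc (u_sol alpha f)).
Proof.
move=> a0 m0 ms sM hF mf hcv.
have fni n : (@lebesgue_measure R).-integrable (@I R) (EFin \o fn n).
  by case: (hF n).
have mfn n : measurable_fun (T:=measurableTypeR R) (@I R) (EFin \o fn n).
  exact: measurable_int (fni n).
have mF : measurable_fun (T:=measurableTypeR R) (@I R) (EFin \o f).
  by apply/measurable_EFinP; exact mf.
have ff : {ae @lebesgue_measure R, forall x, @I R x ->
    (fun n => (EFin \o fn n) x) @ \oo --> (EFin \o f) x}.
  apply: filterS hcv; first exact: (ae_filter_ringOfSetsType (@lebesgue_measure R)).
  move=> x H Ix.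
  by apply: cvg_EFin; [exact: nearW | exact: H Ix].
have fg : {ae @lebesgue_measure R, forall x n, @I R x ->
    (`|(EFin \o fn n) x| <= (EFin \o cst M) x)%E}.
  have : \forall x \ae @lebesgue_measure R, forall n, @I R x -> m <= fn n x <= M.
    by apply: ae_foralln => n; case: (hF n).
  apply: filterS; first exact: (ae_filter_ringOfSetsType (@lebesgue_measure R)).
  move=> x H n Ix; have /andP[h1 h2] := H n Ix.
  rewrite /= lee_fin ler_norml h2 andbT; lra.
have [fint dc _] := dominated_convergence (@mI R) mfn mF ff (int_cst M) fg.
have dcR : (fun n => Rintegral (@lebesgue_measure R) (@I R) (fun y => `|(fn n \- f) y|)) @ \oo --> 0.
  exact: (fine_cvg dc).
have P1 : forall e : R, 0 < e -> \forall n \near \oo,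
      forall x, @I R x -> `|u_sol alpha (fn n) x - u_sol alpha f x| < e.
  move=> e e0.
  have Cb0 := Cb_ge0 a0.
  have e1 : 0 < e / (Cb alpha + 1) by rewrite divr_gt0 // ltr_wpDl.
  move/cvgrPdist_lt : dcR => /(_ _ e1); apply: filterS => n hn x Ix.
  rewrite u_diff //; apply: le_lt_trans; first exact: (u_bound a0 Ix (intB (fni n) fint)).
  move: hn; rewrite sub0r normrN ger0_norm; last first.
    by apply: Rintegral_ge0 => y _.
  set r := Rintegral _ _ _ => hr.
  have r0 : 0 <= r by apply: Rintegral_ge0 => y _.
  rewrite (@le_lt_trans _ _ (Cb alpha * (e / (Cb alpha + 1)))) //.
    by rewrite ler_wpM2l // ltW.
  rewrite mulrA ltr_pdivrMr ?ltr_wpDl // mulrC ltr_pM2l //; lra.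
split => //.
exists id; split; first by [].
apply/cvgrPdist_lt => e e0.
have e4 : 0 < e / 4 by rewrite divr_gt0.
move: (P1 _ e4); apply: filterS => n hn.
have := @osc_close R (u_sol alpha f) (u_sol alpha (fn n)) (e / 4)
  (Cb alpha * Rintegral (@lebesgue_measure R) (@I R) (fun y => `|f y|)).
move=> /(_ (fun x Ix => u_bound a0 Ix fint)).
move=> /(_ (fun x Ix => ltW (le_lt_trans (le_refl _) (eq_ind _ (fun t => t < e / 4) (hn x Ix) _ (distrC _ _))))).
move=> h; apply: le_lt_trans h _; lra.
Qed.
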